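(* Let $P$ be a positive opetope and let $P^{op}$ be the positive hypergraph obtained from $P$ by interchanging the values of $\gamma$ and $\delta$ on the faces of dimension $1$ (i.e. for $a\in P_1$, the codomain of $a$ in $P^{op}$ is the unique element of $\delta(a)$ and $\delta^{P^{op}}(a)=\{\gamma(a)\}$), leaving everything else unchanged. Then $P^{op}$ is a positive opetope.
   Context: A positive hypergraph $S$ consists of finite sets $S_k$ ($k\in\mathbb{N}$), only finitely many nonempty, functions $\gamma:S_{k+1}\to S_k$, and for each $k$ an assignment $\delta$ sending each $a\in S_{k+1}$ to a nonempty subset $\delta(a)\subseteq S_k$, with $\delta(a)$ a singleton for $a\in S_1$. A face is identified with its singleton; $\gamma(X)=\{\gamma(a):a\in X\}$, $\delta(X)=\bigcup_{a\in X}\delta(a)$. For $k>0$ the lower order $<^-$ on $S_k$ is the transitive closure of: $a\lhd b$ iff $\gamma(a)\in\delta(b)$. The upper order $<^+$ on $S_k$ is the transitive closure of: $a\lhd b$ iff there is $\alpha\in S_{k+1}$ with $a\in\delta(\alpha)$, $\gamma(\alpha)=b$; $a\perp^{\pm}b$ iff $a<^{\pm}b$ or $b<^{\pm}a$. A positive opetopic cardinal is a positive hypergraph with $S_0\ne\emptyset$ such that: globularity ($\gamma\gamma(a)=\gamma\delta(a)-\delta\delta(a)$, $\delta\gamma(a)=\delta\delta(a)-\gamma\delta(a)$ for $\dim a\ge2$); each $<^+$ is a strict order, linear on $S_0$; for $k>0$, $\perp^-\cap\perp^+=\emptyset$ on $S_k$; for $x\in S_{k-1}$, $\{a:\gamma(a)=x\}$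 and $\{a:x\in\delta(a)\}$ are linearly ordered by $<^+$. A positive opetope is a positive opetopic cardinal with $|P_m-\delta(P_{m+1})|\le1$ for all $m$. *)

(* Defs.v *)
From mathcomp Require Import all_boot.
Set Implicit Arguments. Unset Strict Implicit. Unset Printing Implicit Defensive.

(* A (candidate) positive hypergraph: all faces of all dimensions are the
   elements of one finite type T (so only finitely many S_k are nonempty),
   S_k = [set a | dim a == k].  gam and del are only meaningful on faces of
   positive dimension. *)
Record hypergraph (T : finType) := Hypergraph {
  hdim : T -> nat;
  hgam : T -> T;
  hdel : T -> {set T} }.

Section Defs.
Variable T : finType.
Variable S : hypergraph T.
Local Notation dim := (hdim S).
Local Notation gam := (hgam S).
Local Notation del := (hdel S).

Definition faces (k : nat) : {set T} := [set a | dim a == k].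

Definition is_pos_hypergraph : Prop :=
  forall a, 0 < dim a ->
    [/\ dim (gam a) = (dim a).-1,
        del a != set0,
        (forall b, b \in del a -> dim b = (dim a).-1) &
        (dim a = 1 -> #|del a| = 1)].

Definition gamS (X : {set T}) : {set T} := gam @: X.
Definition delS (X : {set T}) : {set T} := \bigcup_(a in X) del a.

Definition tclos (R : rel T) : rel T :=
  fun a b => [exists c, R a c && connect R c b].

Definition lower_rel : rel T :=
  fun a b => [&& 0 < dim a, dim a == dim b & gam a \in del b].
Definition lower_lt : rel T := tclos lower_rel.

Definition upper_rel : rel T :=
  fun a b => (dim a == dim b) &&
    [exists al, [&& dim al == (dim a).+1, a \in del al & gam al == b]].
Definition upper_lt : rel T := tclos upper_rel.

Definition lower_perp (a b : T) : bool := lower_lt a b || lower_lt b a.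
Definition upper_perp (a b : T) : bool := upper_lt a b || upper_lt b a.

Definition is_pos_opetopic_cardinal : Prop :=
  [/\ is_pos_hypergraph,
      (exists a, dim a = 0),
      (forall a, 2 <= dim a ->
         gamS [set gam a] = gamS (del a) :\: delS (del a) /\
         delS [set gam a] = delS (del a) :\: gamS (del a)),
      (* each <^+ is a strict order (transitive by construction) *)
      (forall a, ~~ upper_lt a a) &
      (forall a b, dim a = 0 -> dim b = 0 -> a != b -> upper_perp a b)] /\
      [/\
          (forall a b, 0 < dim a -> dim a = dim b ->
             ~~ (lower_perp a b && upper_perp a b)),
          (forall x a b, dim a = (dim x).+1 -> dim b = (dim x).+1 ->
             gam a = x -> gam b = x -> a != b -> upper_perp a b) &
          (forall x a b, dim a = (dim x).+1 -> dim b = (dim x).+1 ->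
             x \in del a -> x \in del b -> a != b -> upper_perp a b)].

Definition is_pos_opetope : Prop :=
  is_pos_opetopic_cardinal /\
  forall m, #|faces m :\: delS (faces m.+1)| <= 1.

End Defs.

(* P^op: interchange gamma and delta on faces of dimension 1. For a in P_1,
   the new codomain is the unique element of del a (picked from del a; the
   default is never used when del a is a singleton). *)
Definition hop (T : finType) (P : hypergraph T) : hypergraph T :=
  Hypergraph (hdim P)
    (fun a => if hdim P a == 1 then odflt (hgam P a) [pick x in hdel P a]
              else hgam P a)
    (fun a => if hdim P a == 1 then [set hgam P a] else hdel P a).

(* Main.v *)
Require Import Defs.
From mathcomp Require Import all_boot.
Set Implicit Arguments. Unset Strict Implicit. Unset Printing Implicit Defensive.

Section Aux.
Variable T : finType.

Lemma connect_mono_in (e e' : rel T) (p : pred T) :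
  (forall x y, p x -> e x y -> p y && e' x y) ->
  forall x y, p x -> connect e x y -> connect e' x y.
Proof.
move=> H x y px /connectP [s]; elim: s x px => [|z s IH] x px /=.
  by move=> _ ->.
move=> /andP[exz pz] ey.
have /andP[pz' e'xz] := H _ _ px exz.
exact: connect_trans (connect1 e'xz) (IH _ pz' pz ey).
Qed.

Lemma connect_inv (e : rel T) (p : pred T) :
  (forall x y, p x -> e x y -> p y) -> forall x y, p x -> connect e x y -> p y.
Proof.
move=> H x y px /connectP [s]; elim: s x px => [|z s IH] x px /=.
  by move=> _ ->.
move=> /andP[exz pz] ey; exact: IH (H _ _ px exz) pz ey.
Qed.

Lemma tclos_inv (e : rel T) (p : pred T) :
  (forall x y, p x -> e x y -> p y) -> forall x y, p x -> tclos e x y -> p y.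
Proof.
move=> H x y px /existsP [c /andP[exc cy]].
exact: connect_inv H _ _ (H _ _ px exc) cy.
Qed.

Lemma tclos_alt (R : rel T) a b :
  tclos R a b = [exists c, connect R a c && R c b].
Proof.
apply/existsP/existsP.
  case=> c /andP[Rac /connectP [s]].
  elim: s a c Rac => [|z s IH] a c Rac /=.
    by move=> _ ->; exists a; rewrite connect0.
  move=> /andP[Rcz pz] eb.
  have [c' /andP[cc' Rc'b]] := IH _ _ Rcz pz eb.
  by exists c'; rewrite (connect_trans (connect1 Rac) cc').
case=> c /andP[/connectP [s ps ec] Rcb].
elim: s a ps ec => [|z s IH] a /=.
  by move=> _ Ec; exists b; rewrite -Ec Rcb connect0.
move=> /andP[Raz pz] ec.
have [d /andP[Rzd db]] := IH _ pz ec.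
by exists z; rewrite Raz (connect_trans (connect1 Rzd) db).
Qed.

Lemma tclos_same (R R' : rel T) (p : pred T) :
  (forall x y, p x -> R x y -> p y && R' x y) ->
  forall a b, p a -> tclos R a b -> tclos R' a b.
Proof.
move=> H a b pa /existsP [c /andP[Rac cb]].
have /andP[pc R'ac] := H _ _ pa Rac.
apply/existsP; exists c; rewrite R'ac /=.
exact: connect_mono_in H _ _ pc cb.
Qed.

Lemma tclos_flip (R R' : rel T) (p : pred T) :
  (forall x y, p x -> R' x y -> p y && R y x) ->
  forall a b, p a -> tclos R' a b -> tclos R b a.
Proof.
move=> H a b pa /existsP [c /andP[R'ac cb]].
have /andP[pc Rca] := H _ _ pa R'ac.
have : connect [rel x y | R y x] c b.
  apply: (connect_mono_in (p := p)) cb => // x y px /(H _ _ px) //.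
rewrite connect_rev /= => bc.
rewrite tclos_alt; apply/existsP; exists c; by rewrite bc Rca.
Qed.

Variable P : hypergraph T.
Hypothesis HP : is_pos_hypergraph P.
Local Notation dim := (hdim P).

Lemma pick_del a : dim a = 1 -> forall x,
  (hgam (hop P) a == x) = (x \in hdel P a).
Proof.
move=> Ha x.
have Ha0 : 0 < dim a by rewrite Ha.
have [_ _ _ c1] := HP Ha0.
have := c1 Ha; move/eqP/cards1P => [y Ey].
rewrite /hop /= Ha eqxx Ey.
case: pickP => [z|]; last by move/(_ y); rewrite in_set1 eqxx.
rewrite !in_set1 => /eqP -> /=; by rewrite eq_sym.
Qed.

Lemma pick_del' a : dim a = 1 -> forall x,
  (odflt (hgam P a) [pick x in hdel P a] == x) = (x \in hdel P a).
Proof. by move=> H x; have := pick_del H x; rewrite /hop /= H. Qed.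

Lemma gam_op a : dim a != 1 -> hgam (hop P) a = hgam P a.
Proof. by move=> H; rewrite /hop /= (negbTE H). Qed.
Lemma del_op a : dim a != 1 -> hdel (hop P) a = hdel P a.
Proof. by move=> H; rewrite /hop /= (negbTE H). Qed.
Lemma del_op1 a : dim a = 1 -> hdel (hop P) a = [set hgam P a].
Proof. by move=> H; rewrite /hop /= H. Qed.

Lemma gamS_op1 (X : {set T}) : (forall a, a \in X -> dim a = 1) ->
  gamS (hop P) X = delS P X.
Proof.
move=> H; apply/setP => y; apply/imsetP/bigcupP.
  by case=> a aX ->; exists a => //; rewrite -pick_del ?H.
by case=> a aX yd; exists a => //; apply/eqP; rewrite eq_sym pick_del ?H.
Qed.

Lemma delS_op1 (X : {set T}) : (forall a, a \in X -> dim a = 1) ->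
  delS (hop P) X = gamS P X.
Proof.
move=> H; apply/setP => y; apply/bigcupP/imsetP.
  by case=> a aX; rewrite del_op1 ?H // in_set1 => /eqP ->; exists a.
by case=> a aX ->; exists a => //; rewrite del_op1 ?H // in_set1.
Qed.

Lemma gamS_op (X : {set T}) : (forall a, a \in X -> dim a != 1) ->
  gamS (hop P) X = gamS P X.
Proof.
move=> H; apply/setP => y; apply/imsetP/imsetP;
  by case=> a aX ->; exists a => //; rewrite gam_op ?H.
Qed.

Lemma delS_op (X : {set T}) : (forall a, a \in X -> dim a != 1) ->
  delS (hop P) X = delS P X.
Proof.
move=> H; apply/setP => y; apply/bigcupP/bigcupP;
  by case=> a aX ya; exists a => //; move: ya; rewrite del_op ?H.
Qed.

Lemma upper_rel_dim (Q : hypergraph T) a b : upper_rel Q a b -> hdim Q a = hdim Q b.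
Proof. by case/andP => /eqP. Qed.
Lemma lower_rel_dim (Q : hypergraph T) a b : lower_rel Q a b -> hdim Q a = hdim Q b.
Proof. by case/and3P => _ /eqP. Qed.

Lemma upper_rel_op a b : upper_rel (hop P) a b =
  if dim a == 0 then upper_rel P b a else upper_rel P a b.
Proof.
rewrite /upper_rel; change (hdim (hop P)) with dim.
case: (dim a =P dim b) => [Eab|Nab]; last first.
  by case: ifP => _; rewrite ?andFb // eq_sym; case: eqP => // /esym.
rewrite Eab eqxx /=.
case: ifP => [/eqP b0|bn].
  rewrite b0; apply: eq_existsb => al.
  case: (dim al =P 1) => //= E.
  by rewrite in_set1 pick_del' // eq_sym andbC.
apply: eq_existsb => al.
case: (dim al =P (dim b).+1) => //= E.
by rewrite E eqSS bn.
Qed.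

Lemma lower_rel_op a b : lower_rel (hop P) a b =
  if dim a == 1 then lower_rel P b a else lower_rel P a b.
Proof.
rewrite /lower_rel; change (hdim (hop P)) with dim.
case: (dim a =P dim b) => [Eab|Nab]; last first.
  have ne : (dim b == dim a) = false by apply/eqP => /esym.
  by case: ifP => _; rewrite ?ne !(andFb, andbF).
rewrite Eab eqxx /=.
case: ifP => [/eqP b1|bn].
  by rewrite -Eab b1 /= in_set1 pick_del'.
by rewrite -Eab bn.
Qed.

Lemma upper_lt_op a b : upper_lt (hop P) a b =
  if dim a == 0 then upper_lt P b a else upper_lt P a b.
Proof.
rewrite /upper_lt; case: ifP => Ha.
  apply/idP/idP.
    apply: (tclos_flip (p := fun x => dim x == 0)) => // x y px.
    rewrite upper_rel_op px => Ryx; rewrite Ryx andbT.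
    by rewrite (upper_rel_dim Ryx).
  move=> tba.
  have Hi : forall x y, dim x == dim b -> upper_rel P x y -> dim y == dim b.
    by move=> x y /eqP <- /upper_rel_dim ->.
  have /eqP Eba := tclos_inv Hi (eqxx _) tba.
  move: tba; apply: (tclos_flip (p := fun x => dim x == 0)); last first.
    by rewrite -Eba.
  move=> x y px Ryx.
  have Ey := upper_rel_dim Ryx; rewrite /= in Ey.
  by rewrite upper_rel_op -Ey px.
apply/idP/idP; apply: (tclos_same (p := fun x => dim x != 0)); rewrite ?Ha //.
  move=> x y px; rewrite upper_rel_op (negbTE px) => R.
  by rewrite R -(upper_rel_dim R) px.
move=> x y px R; have Ey := upper_rel_dim R.
by rewrite upper_rel_op (negbTE px) R -Ey px.
Qed.

Lemma lower_lt_op a b : lower_lt (hop P) a b =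
  if dim a == 1 then lower_lt P b a else lower_lt P a b.
Proof.
rewrite /lower_lt; case: ifP => Ha.
  apply/idP/idP.
    apply: (tclos_flip (p := fun x => dim x == 1)) => // x y px.
    rewrite lower_rel_op px => Ryx; rewrite Ryx andbT.
    by rewrite (lower_rel_dim Ryx).
  move=> tba.
  have Hi : forall x y, dim x == dim b -> lower_rel P x y -> dim y == dim b.
    by move=> x y /eqP <- /lower_rel_dim ->.
  have /eqP Eba := tclos_inv Hi (eqxx _) tba.
  move: tba; apply: (tclos_flip (p := fun x => dim x == 1)); last first.
    by rewrite -Eba.
  move=> x y px Ryx.
  have Ey := lower_rel_dim Ryx; rewrite /= in Ey.
  by rewrite lower_rel_op -Ey px.
apply/idP/idP; apply: (tclos_same (p := fun x => dim x != 1)); rewrite ?Ha //.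
  move=> x y px; rewrite lower_rel_op (negbTE px) => R.
  by rewrite R -(lower_rel_dim R) px.
move=> x y px R; have Ey := lower_rel_dim R.
by rewrite lower_rel_op (negbTE px) R -Ey px.
Qed.

Lemma upper_perp_op a b : dim a = dim b ->
  upper_perp (hop P) a b = upper_perp P a b.
Proof.
move=> E; rewrite /upper_perp !upper_lt_op -E.
by case: ifP => // _; rewrite orbC.
Qed.

Lemma lower_perp_op a b : dim a = dim b ->
  lower_perp (hop P) a b = lower_perp P a b.
Proof.
move=> E; rewrite /lower_perp !lower_lt_op -E.
by case: ifP => // _; rewrite orbC.
Qed.

Lemma upper_lt_target x y : upper_lt P x y -> dim y = 0 ->
  y \in gamS P (faces P 1).
Proof.
rewrite /upper_lt tclos_alt => /existsP [c /andP[_ /andP[/eqP dc /existsP [al]]]].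
case/and3P => /eqP dal _ /eqP Eg dy; rewrite -Eg.
by apply: imset_f; rewrite inE dal dc dy.
Qed.

End Aux.

Theorem mainTheorem9 (T : finType) (P : hypergraph T) :
  is_pos_opetope P -> is_pos_opetope (hop P).
Proof.
move=> [[[HP Hex Hglob Hirr Hlin] [Hdisj Hgam Hdel]] Hcard].
have pick_del := pick_del HP.
have gamS_op1 := gamS_op1 HP.
have upper_perp_op := upper_perp_op HP.
have lower_perp_op := lower_perp_op HP.
have upper_lt_op := upper_lt_op HP.
split; [split; split|].
- move=> a Ha; rewrite /= in Ha; case: (HP a Ha) => g n d c.
  case E: (hdim P a == 1).
    move/eqP: E => E.
    have gd : hgam (hop P) a \in hdel P a by rewrite -pick_del.
    rewrite del_op1 //; split.
    + by rewrite (d _ gd).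
    + by apply/set0Pn; exists (hgam P a); rewrite in_set1.
    + by move=> b; rewrite in_set1 => /eqP ->.
    + by rewrite cards1.
  by rewrite gam_op ?del_op ?E.
- exact: Hex.
- move=> a Ha; rewrite /= in Ha; have [g n d c] := HP a (ltn_trans (ltn0Sn 0) Ha).
  have na : hdim P a != 1 by case: (hdim P a) Ha => [|[]].
  rewrite gam_op ?del_op //.
  case: (hdim P a =P 2) => [E2|N2].
  + have H1 : forall b, b \in [set hgam P a] -> hdim P b = 1.
      by move=> b; rewrite in_set1 => /eqP ->; rewrite g E2.
    have H2 : forall b, b \in hdel P a -> hdim P b = 1.
      by move=> b /d ->; rewrite E2.
    rewrite !gamS_op1 ?delS_op1 //.
    by have [-> ->] := Hglob a Ha.
  + have H1 : forall b, b \in [set hgam P a] -> hdim P b != 1.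
      by move=> b; rewrite in_set1 => /eqP ->; rewrite g; case: (hdim P a) Ha N2 => [|[|[|]]].
    have H2 : forall b, b \in hdel P a -> hdim P b != 1.
      by move=> b /d ->; case: (hdim P a) Ha N2 => [|[|[|]]].
    by rewrite !gamS_op ?delS_op //; apply: Hglob.
- by move=> a; rewrite upper_lt_op; case: ifP => _; apply: Hirr.
- move=> a b Ha Hb ab; rewrite /= in Ha Hb; rewrite upper_perp_op ?Ha ?Hb //; exact: Hlin.
- move=> a b Ha Eab; rewrite /= in Ha Eab; rewrite upper_perp_op // lower_perp_op //; exact: Hdisj.
- move=> x a b Ha Hb ga gb ab; rewrite /= in Ha Hb; rewrite upper_perp_op ?Ha ?Hb //.
  case: (hdim P x =P 0) => [x0|xn].
    rewrite x0 in Ha Hb.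
    apply: (Hdel x) => //; rewrite ?x0 // -pick_del //; by apply/eqP.
  have na : hdim P a != 1 by rewrite Ha eqSS; apply/eqP.
  have nb : hdim P b != 1 by rewrite Hb eqSS; apply/eqP.
  by apply: (Hgam x) => //; rewrite -gam_op.
- move=> x a b Ha Hb xa xb ab; rewrite /= in Ha Hb; rewrite upper_perp_op ?Ha ?Hb //.
  case: (hdim P x =P 0) => [x0|xn].
    rewrite x0 in Ha Hb.
    move: xa xb; rewrite !del_op1 // !in_set1 => /eqP xa /eqP xb.
    by apply: (Hgam x); rewrite ?x0.
  have na : hdim P a != 1 by rewrite Ha eqSS; apply/eqP.
  have nb : hdim P b != 1 by rewrite Hb eqSS; apply/eqP.
  by apply: (Hdel x) => //; rewrite -del_op.
- move=> [|m].
    change (faces (hop P) 0) with (faces P 0).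
    rewrite delS_op1; last by move=> a; rewrite inE => /eqP.
    rewrite leqNgt; apply/negP => /card_gt1P [x [y [hx hy nxy]]].
    move: hx hy; rewrite !inE => /andP[gx /eqP x0] /andP[gy /eqP y0].
    case/orP: (Hlin x y x0 y0 nxy) => lt.
      by move: gy; rewrite (upper_lt_target lt y0).
    by move: gx; rewrite (upper_lt_target lt x0).
  change (faces (hop P) m.+1) with (faces P m.+1).
  rewrite delS_op; first exact: Hcard.
  by move=> a; rewrite inE => /eqP ->.
Qed.
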